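(* Let $g$ be an $n$-person no-sink WTT game form satisfying the standing assumptions below, and suppose $g$ contains a $k$-box for some $1\le k\le n$. Then $g$ contains a $(k-1)$-box or a $1$-box.
   Context: Let $X_1,\dots,X_n$ and $A$ be finite nonempty sets. An $n$-person game form is a map $g: X_1\times\cdots\times X_n\to A$; elements of $X=X_1\times\cdots\times X_n$ are strategy profiles. For a direction $i\in[n]$ write $X_{-i}=\prod_{t\neq i}X_t$, and for $s\in X_i$, $y\in X_{-i}$ write $(s,y)$ for the profile with $i$-th coordinate $s$ and other coordinates $y$. The hyperplane perpendicular to direction $i$ at $s\in X_i$ is $H_s=\{x\in X: x_i=s\}$; for a profile $x$ write $H_i^x$ for the hyperplane perpendicular to direction $i$ containing $x$. $g$ is weakly totally tight (WTT) if for every $i\in[n]$, all $s\neq s'$ in $X_i$ and all $y\neq y'$ in $X_{-i}$, at least one of $g(s,y)=g(s,y')$, $g(s,y)=g(s',y)$, $g(s',y')=g(s',y)$, $g(s',y')=g(s,y')$ holds. A set $S\subseteq X$ is a constant region if there is $c\in A$ with $g(x)=c$ for all $x\in S$. For distinct $j,k\in X_i$, $H_j^{\neq}(k)=\{(j,y): y\in X_{-i},\ g(j,y)\neq g(k,y)\}$. We write $H_j\stackrel{c}{\longrightarrow}H_k$ if $g(x)=c$ for all $x\in H_j^{\neq}(k)$, and $H_j\stackrel{c}{\Longrightarrow}H_k$ if $H_j\stackrel{c}{\longrightarrow}H_k$ and there is no outcome $d$ with $H_k\stackrel{d}{\longrightarrow}H_j$. If there exist $k\in X_i\setminus\{j\}$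 and $c$ with $H_j\stackrel{c}{\Longrightarrow}H_k$, $c$ is called the proper outcome of $H_j$ (for WTT $g$ it does not depend on $k$). We say an outcome $a$ is not the proper outcome of a hyperplane $H$ if $H$ has no proper outcome or its proper outcome differs from $a$. $H_j$ is a sink hyperplane if for every $k\in X_i\setminus\{j\}$ there is an outcome $c_k$ with $H_k\stackrel{c_k}{\longrightarrow}H_j$; $g$ is no-sink if there is no sink hyperplane in any direction. A WTT no-sink $g$ contains a $k$-box if there are profiles $x,y$ such that: $g(x)\neq g(y)$; $x$ and $y$ differ in exactly $k$ coordinates $i_1,\dots,i_k$; and for every $1\le t\le k$, $g(x)$ is not the proper outcome of $H_{i_t}^x$ and $g(y)$ is not the proper outcome of $H_{i_t}^y$. Standing assumptions: no hyperplane of $g$ is a constant region, and for every $i$ and distinct $j,k\in X_i$ there is $y\in X_{-i}$ with $g(j,y)\neq g(k,y)$. *)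

(* Defs.v *)
From mathcomp Require Import all_boot.
Unset Printing Implicit Defensive.

Section GameForms.
Variables (n : nat) (X : 'I_n -> finType) (A : finType).

Definition profile := forall i : 'I_n, X i.

(* (s, y): the profile with i-th coordinate s and other coordinates those of y.
   An element y of X_{-i} is represented by a full profile whose i-th
   coordinate is ignored. *)
Definition upd (y : profile) (i : 'I_n) (s : X i) : profile :=
  fun j => match i =P j with
           | ReflectT e => ecast j (X j) e s
           | ReflectF _ => y j
           end.

Definition differ_off (i : 'I_n) (y y' : profile) : Prop :=
  exists j : 'I_n, j != i /\ y j != y' j.

Variable g : profile -> A.

Definition WTT : Prop :=
  forall (i : 'I_n) (s s' : X i) (y y' : profile),
    s != s' -> differ_off i y y' ->
    g (upd y i s) = g (upd y' i s) \/
    g (upd y i s) = g (upd y i s') \/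
    g (upd y' i s') = g (upd y i s') \/
    g (upd y' i s') = g (upd y' i s).

Definition hyperplane_constant (i : 'I_n) (s : X i) : Prop :=
  exists c : A, forall y : profile, g (upd y i s) = c.

Definition arrow (i : 'I_n) (j k : X i) (c : A) : Prop :=
  forall y : profile, g (upd y i j) != g (upd y i k) -> g (upd y i j) = c.

Definition sarrow (i : 'I_n) (j k : X i) (c : A) : Prop :=
  arrow i j k c /\ ~ (exists d : A, arrow i k j d).

Definition proper_outcome (i : 'I_n) (j : X i) (c : A) : Prop :=
  exists k : X i, k != j /\ sarrow i j k c.

Definition sink (i : 'I_n) (j : X i) : Prop :=
  forall k : X i, k != j -> exists c : A, arrow i k j c.

Definition no_sink : Prop := forall (i : 'I_n) (j : X i), ~ sink i j.

(* g contains a k-box; H_i^x is the hyperplane H_{x i} in direction i *)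
Definition has_box (k : nat) : Prop :=
  exists x y : profile,
    g x != g y /\
    #|[set i : 'I_n | x i != y i]| = k /\
    (forall i : 'I_n, x i != y i ->
       ~ proper_outcome i (x i) (g x) /\ ~ proper_outcome i (y i) (g y)).

End GameForms.

Arguments profile {n} X.
Arguments upd {n X} y i s.
Arguments differ_off {n X} i y y'.
Arguments WTT {n X A} g.
Arguments hyperplane_constant {n X A} g i s.
Arguments arrow {n X A} g i j k c.
Arguments sarrow {n X A} g i j k c.
Arguments proper_outcome {n X A} g i j c.
Arguments sink {n X A} g i j.
Arguments no_sink {n X A} g.
Arguments has_box {n X A} g k.

(* Main.v *)
Require Import Defs.
From mathcomp Require Import all_boot.
From Stdlib Require Import FunctionalExtensionality.

Section Aux.
Variables (n : nat) (X : 'I_n -> finType) (A : finType) (g : profile X -> A).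

Lemma upd_same (y : profile X) i (s : X i) : upd y i s i = s.
Proof.
rewrite /upd; case: (i =P i) => [e|]; last by [].
by rewrite (eq_axiomK e).
Qed.

Lemma upd_other (y : profile X) i (s : X i) j : j != i -> upd y i s j = y j.
Proof.
move=> ne; rewrite /upd; case: (i =P j) => [e|//]; exfalso.
by move: ne; rewrite e eqxx.
Qed.

Lemma upd_id (x : profile X) i : upd x i (x i) = x.
Proof.
apply: functional_extensionality_dep => j.
case: (eqVneq j i) => [->|ne]; first by rewrite upd_same.
by rewrite upd_other.
Qed.

Definition good (u v : profile X) := forall j, u j != v j ->
  ~ proper_outcome g j (u j) (g u) /\ ~ proper_outcome g j (v j) (g v).

Lemma good_sym u v : good u v -> good v u.
Proof. move=> h j; rewrite eq_sym => /h [] ? ?; by split. Qed.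

Lemma box1 (u v : profile X) i : u i != v i -> good u v ->
  g (upd u i (v i)) = g v -> g u != g v -> has_box g 1.
Proof.
move=> huv hg he hne; exists u, (upd u i (v i)); split; first by rewrite he.
split.
  have -> : [set j | u j != upd u i (v i) j] = [set i].
    apply/setP => j; rewrite !inE; case: (eqVneq j i) => [->|ne].
      by rewrite upd_same huv.
    by rewrite upd_other // eqxx.
  by rewrite cards1.
move=> j; case: (eqVneq j i) => [->|ne]; last by rewrite upd_other // eqxx.
rewrite upd_same he => _; have [h1 h2] := hg i huv; by split.
Qed.

Lemma boxk1 (u v : profile X) i : u i != v i -> good u v ->
  g (upd u i (v i)) = g u -> g u != g v ->
  has_box g (#|[set j | u j != v j]| - 1).
Proof.
move=> huv hg he hne; exists (upd u i (v i)), v; split; first by rewrite he.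
split.
  have -> : [set j | upd u i (v i) j != v j] = [set j | u j != v j] :\ i.
    apply/setP => j; rewrite !inE; case: (eqVneq j i) => [->|ne].
      by rewrite upd_same eqxx.
    by rewrite upd_other.
  rewrite (cardsD1 i [set j | u j != v j]) inE huv.
  by rewrite add1n subn1.
move=> j; case: (eqVneq j i) => [->|ne]; first by rewrite upd_same eqxx.
rewrite upd_other // he => h; have [h1 h2] := hg j h; by split.
Qed.

End Aux.
Arguments good {n X A} g u v.
Arguments good_sym {n X A g u v}.
Arguments box1 {n X A g u v i}.
Arguments boxk1 {n X A g u v i}.

Theorem mainTheorem6 (n : nat) (X : 'I_n -> finType) (A : finType)
  (g : profile X -> A)
  (HXne : forall i : 'I_n, 0 < #|X i|) (HAne : 0 < #|A|)
  (Hwtt : WTT g) (Hns : no_sink g)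
  (Hnc : forall (i : 'I_n) (s : X i), ~ hyperplane_constant g i s)
  (Hdist : forall (i : 'I_n) (j k : X i), j != k ->
             exists y : profile X, g (upd y i j) != g (upd y i k))
  (k : nat) (Hk : 1 <= k <= n) :
  has_box g k -> has_box g (k - 1) \/ has_box g 1.
Proof.
move=> [x [y [hne [hcard hg]]]].
case: (leqP k 1) => hk1.
  right; have e : k = 1 by case/andP: Hk => a _; apply/eqP; rewrite eqn_leq hk1 a.
  by rewrite -e; exists x, y.
have hg' : good g x y by [].
have : 0 < #|[set j | x j != y j]| by rewrite hcard (leq_trans _ hk1).
case/card_gt0P => i; rewrite inE => hi.
have hd : differ_off i x y.
  have : 0 < #|[set j | x j != y j] :\ i|.
    move: hcard; rewrite (cardsD1 i) inE hi add1n => hc.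
    by move: hk1; rewrite -hc ltnS.
  case/card_gt0P => j; rewrite !inE => /andP [ji hj]; by exists j.
have hcard' : #|[set j | y j != x j]| = k.
  by rewrite -hcard; apply: eq_card => j; rewrite !inE eq_sym.
have hi' : y i != x i by rewrite eq_sym.
case: (Hwtt i (x i) (y i) x y hi hd) => [h|[h|[h|h]]]; rewrite !upd_id in h.
- right; apply: (box1 (u:=y) (v:=x) hi' (good_sym hg')); first by rewrite h.
  by rewrite eq_sym.
- left; rewrite -hcard; apply: (boxk1 hi hg') => //; by rewrite h.
- right; apply: (box1 (u:=x) (v:=y) hi hg') => //; by rewrite h.
- left; rewrite -hcard'; apply: (boxk1 hi' (good_sym hg')); first by rewrite h.
  by rewrite eq_sym.
Qed.
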